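(* Consider four bosonic modes labelled $1,2,3,4$, and a beam-splitter network $\hat B_{\text{network}}=\hat B_{j_4k_4}\hat B_{j_3k_3}\hat B_{j_2k_2}\hat B_{j_1k_1}$ consisting of four balanced beam splitters, where $j_i\neq k_i\in\{1,2,3,4\}$ for each $i$ and the beam splitter $\hat B_{j_1k_1}$ acts first on the state, then $\hat B_{j_2k_2}$, and so on. Then $\hat B_{\text{network}}$ is a real balanced four-splitter if and only if all of the following hold: (1) each mode is acted on by exactly two of the four beam splitters; (2) all modes interact with a first beam splitter before any mode interacts with a second one (i.e., in the order of application, no beam splitter acts on a mode that has already been acted on while some mode has not yet been acted on by any beam splitter); (3) no two of the beam splitters act on the same (unordered) pair of modes.
   Context: For modes with annihilation operators $\hat a_j$ and quadratures $\hat q_j=(\hat a_j+\hat a_j^\dagger)/\sqrt2$, $\hat p_j=-i(\hat a_j-\hat a_j^\dagger)/\sqrt2$, the balanced beam splitter from mode $j$ to mode $k$ is $\hat B_{jk}=e^{\frac{\pi}{4}(\hat a_j\hat a_k^\dagger-\hat a_j^\dagger\hat a_k)}$ (note $\hat B_{kj}=\hat B_{jk}^\dagger$, so each beam splitter may point in either direction). A passive linear-optical unitary $\hat U$ on $N$ modes has matrix $\mathbf U\in\mathrm U(N)$ defined by $\hat U^\dagger\hat{\mathbf a}\hat U=\mathbf U\hat{\mathbf a}$; for $\hat B_{jk}$ this matrix equals the identity except on rows/columns $(j,k)$, where it is $\tfrac1{\sqrt2}\begin{bmatrix}1&-1\\1&1\end{bmatrix}$, and the matrix of the network is the product $\mathbf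 R_{j_4k_4}\mathbf R_{j_3k_3}\mathbf R_{j_2k_2}\mathbf R_{j_1k_1}$. A real balanced four-splitter is a linear-optical unitary on four modes whose matrix is real orthogonal with all entries of equal magnitude (hence $\pm\tfrac12$). *)

(* Defs.v *)
From HB Require Import structures.
From mathcomp Require Import all_boot all_order all_algebra.
From mathcomp Require Import reals.
Set Implicit Arguments. Unset Strict Implicit. Unset Printing Implicit Defensive.
Import Order.TTheory GRing.Theory Num.Theory.
Local Open Scope ring_scope.

(* Modes 1,2,3,4 are represented by 'I_4 = {0,1,2,3}. *)

(* Matrix of the balanced beam splitter B_{jk}: identity except on rows/columns
   (j,k), where it is 1/sqrt2 * [[1,-1],[1,1]]. *)
Definition bs_mx {R : realType} (j k : 'I_4) : 'M[R]_4 :=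
  let c := (Num.sqrt (2 : R))^-1 in
  \matrix_(a < 4, b < 4)
    if a == j then (if b == j then c else if b == k then - c else 0)
    else if a == k then (if b == j then c else if b == k then c else 0)
    else (a == b)%:R.

(* Matrix of the network B_{j4k4} B_{j3k3} B_{j2k2} B_{j1k1}; the beam splitter
   with index i : 'I_4 is the (i+1)-th one applied. *)
Definition network_mx {R : realType} (j k : 'I_4 -> 'I_4) : 'M[R]_4 :=
  bs_mx (j 3%:R) (k 3%:R) *m bs_mx (j 2%:R) (k 2%:R) *m
  bs_mx (j 1%:R) (k 1%:R) *m bs_mx (j 0%:R) (k 0%:R).

Definition real_balanced_four_splitter {R : realType} (M : 'M[R]_4) : Prop :=
  M *m M^T = 1%:M /\ (forall a b a' b' : 'I_4, `|M a b| = `|M a' b'|).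

Definition acts_on (j k : 'I_4 -> 'I_4) (i m : 'I_4) : bool :=
  (j i == m) || (k i == m).

Definition cond_two_each (j k : 'I_4 -> 'I_4) : Prop :=
  forall m : 'I_4, #|[set i : 'I_4 | acts_on j k i m]| = 2%N.

Definition cond_first_round (j k : 'I_4 -> 'I_4) : Prop :=
  forall i m : 'I_4, acts_on j k i m ->
    (exists i' : 'I_4, (i' < i)%N /\ acts_on j k i' m) ->
    forall m' : 'I_4, exists i'' : 'I_4, (i'' < i)%N /\ acts_on j k i'' m'.

Definition cond_distinct_pairs (j k : 'I_4 -> 'I_4) : Prop :=
  forall i i' : 'I_4, i != i' -> [set j i; k i] != [set j i'; k i'].

(* Main.v *)
Require Import Defs.
From HB Require Import structures.
From mathcomp Require Import all_boot all_order all_algebra.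
From mathcomp Require Import reals.
From mathcomp Require Import ring lra zify.
From Stdlib Require Import FunctionalExtensionality.
Import Order.TTheory GRing.Theory Num.Theory.
Local Open Scope ring_scope.

Definition zd := (int * int)%type.
Definition zadd (x y : zd) : zd := (intZmod.addz x.1 y.1, intZmod.addz x.2 y.2).
Definition zmul (x y : zd) : zd :=
  (intZmod.addz (intRing.mulz x.1 y.1) (intRing.mulz (Posz 2) (intRing.mulz x.2 y.2)),
   intZmod.addz (intRing.mulz x.1 y.2) (intRing.mulz x.2 y.1)).
Definition zeqb (a b : int) : bool :=
  match a, b with Posz m, Posz n => eqn m n | Negz m, Negz n => eqn m n | _, _ => false end.
Definition zdeq (x y : zd) := zeqb x.1 y.1 && zeqb x.2 y.2.
Definition oeq (a b : 'I_4) : bool := eqn (nat_of_ord a) (nat_of_ord b).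
Definition smat := 'I_4 -> 'I_4 -> zd.
Definition z0 : zd := (Posz 0, Posz 0).
Definition sS (j k : 'I_4) : smat := fun a b =>
  if oeq a j then (if oeq b j then (Posz 1, Posz 0) else if oeq b k then (Negz 0, Posz 0) else z0)
  else if oeq a k then (if oeq b j then (Posz 1, Posz 0) else if oeq b k then (Posz 1, Posz 0) else z0)
  else if oeq a b then (Posz 0, Posz 1) else z0.
Definition o0 : 'I_4 := @Ordinal 4 0 isT.
Definition o1 : 'I_4 := @Ordinal 4 1 isT.
Definition o2 : 'I_4 := @Ordinal 4 2 isT.
Definition o3 : 'I_4 := @Ordinal 4 3 isT.
Definition smul (A B : smat) : smat := fun a b =>
  zadd (zmul (A a o0) (B o0 b)) (zadd (zmul (A a o1) (B o1 b))
    (zadd (zmul (A a o2) (B o2 b)) (zmul (A a o3) (B o3 b)))).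
Definition allo (p : 'I_4 -> bool) := [&& p o0, p o1, p o2 & p o3].
Definition exo (p : 'I_4 -> bool) := [|| p o0, p o1, p o2 | p o3].
Definition ltb (a b : 'I_4) := (nat_of_ord a < nat_of_ord b)%N.
Definition pick4 {T} (t : T * T * T * T) (a : 'I_4) : T :=
  match nat_of_ord a with 0 => t.1.1.1 | 1 => t.1.1.2 | 2 => t.1.2 | _ => t.2 end.
Definition tab (A : smat) : smat :=
  let r a := (A a o0, A a o1, A a o2, A a o3) in
  let l := (r o0, r o1, r o2, r o3) in
  fun a b => pick4 (pick4 l a) b.
Definition strans (A : smat) : smat := fun a b => A b a.
Definition sP (j k : 'I_4 -> 'I_4) : smat :=
  tab (smul (tab (smul (tab (smul (sS (j o3) (k o3)) (sS (j o2) (k o2)))) (sS (j o1) (k o1)))) (sS (j o0) (k o0))).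
Definition pm2 (x : zd) : bool := zdeq x (Posz 2, Posz 0) || zdeq x (Negz 1, Posz 0).
Definition sym_ok (P : smat) := allo (fun a => allo (fun b => pm2 (P a b))).
Definition wit (P : smat) := exo (fun a => exo (fun b =>
   (zeqb (intRing.mulz (P a b).1 (P a b).2) (Posz 0)) && ~~ pm2 (P a b))).
Definition orth_ok (P : smat) := allo (fun a => allo (fun b =>
  zdeq (smul P (strans P) a b) (if oeq a b then (Posz 16, Posz 0) else z0))).
Definition acts (j k : 'I_4 -> 'I_4) (i m : 'I_4) : bool := oeq (j i) m || oeq (k i) m.
Definition two_b (j k : 'I_4 -> 'I_4) := allo (fun m =>
  eqn (acts j k o0 m + acts j k o1 m + acts j k o2 m + acts j k o3 m)%N 2).
Definition first_b (j k : 'I_4 -> 'I_4) := allo (fun i => allo (fun m =>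
  acts j k i m ==> exo (fun i' => ltb i' i && acts j k i' m) ==>
  allo (fun m' => exo (fun i'' => ltb i'' i && acts j k i'' m')))).
Definition dist_b (j k : 'I_4 -> 'I_4) := allo (fun i => allo (fun i' =>
  ~~ oeq i i' ==> ~~ ((oeq (j i) (j i') && oeq (k i) (k i')) || (oeq (j i) (k i') && oeq (k i) (j i'))))).
Definition result (j k : 'I_4 -> 'I_4) :=
  let P := sP j k in
  let c := [&& two_b j k, first_b j k & dist_b j k] in
  if sym_ok P then orth_ok P && c else wit P && ~~ c.
Definition tf (x0 x1 x2 x3 : 'I_4) : 'I_4 -> 'I_4 := fun i =>
  match nat_of_ord i with 0 => x0 | 1 => x1 | 2 => x2 | _ => x3 end.
Definition bigcheck := allo (fun x0 => allo (fun x1 => allo (fun x2 => allo (fun x3 =>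
  allo (fun y0 => allo (fun y1 => allo (fun y2 => allo (fun y3 =>
  [&& ~~ oeq x0 y0, ~~ oeq x1 y1, ~~ oeq x2 y2 & ~~ oeq x3 y3] ==> result (tf x0 x1 x2 x3) (tf y0 y1 y2 y3))))))))).

Lemma bigcheck_ok : bigcheck. Proof. vm_compute. reflexivity. Qed.

Lemma oeqE (a b : 'I_4) : oeq a b = (a == b). Proof. by []. Qed.
Lemma o_cases (i : 'I_4) : [\/ i = o0, i = o1, i = o2 | i = o3].
Proof.
case: i => [[|[|[|[|n]]]] H]; first (by constructor 1; apply/val_inj);
  first (by constructor 2; apply/val_inj); first (by constructor 3; apply/val_inj);
  first (by constructor 4; apply/val_inj).
by [].
Qed.
Lemma alloE (p : 'I_4 -> bool) : allo p = [forall i, p i].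
Proof.
apply/idP/forallP => [/and4P [h0 h1 h2 h3] i|h]; last by rewrite /allo !h.
by case: (o_cases i) => ->.
Qed.
Lemma exoE (p : 'I_4 -> bool) : exo p = [exists i, p i].
Proof.
apply/idP/existsP => [/or4P [h|h|h|h]|[i]]; try by eexists; exact h.
by case: (o_cases i) => -> h; rewrite /exo h ?orbT.
Qed.
Lemma zeqbP (a b : int) : zeqb a b -> a = b.
Proof. by case: a; case: b => // m n /eqnP ->. Qed.
Lemma zdeqP (x y : zd) : zdeq x y -> x = y.
Proof. by case: x y => [a b] [c d] /andP [/zeqbP /= -> /zeqbP /= ->]. Qed.

Lemma sum4 {V : nmodType} (F : 'I_4 -> V) : \sum_(i < 4) F i = F o0 + F o1 + F o2 + F o3.
Proof.
rewrite !big_ord_recl big_ord0 addr0 !addrA.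
by congr (_ + _ + _ + _); congr F; apply/val_inj.
Qed.

Lemma tfE (j : 'I_4 -> 'I_4) : j = tf (j o0) (j o1) (j o2) (j o3).
Proof.
apply: functional_extensionality => i.
by case: (o_cases i) => ->.
Qed.

Lemma result_ok (j k : 'I_4 -> 'I_4) (hjk : forall i : 'I_4, j i != k i) : result j k.
Proof.
have A : forall p : 'I_4 -> bool, allo p -> forall i, p i by move=> p; rewrite alloE => /forallP.
have := bigcheck_ok; rewrite /bigcheck.
move=> /A/(_ (j o0))/A/(_ (j o1))/A/(_ (j o2))/A/(_ (j o3)).
move=> /A/(_ (k o0))/A/(_ (k o1))/A/(_ (k o2))/A/(_ (k o3)).
by rewrite !oeqE !hjk /= -!tfE.
Qed.

Lemma idx3 : (3%:R : 'I_4) = o3. Proof. by apply/val_inj. Qed.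
Lemma idx2 : (2%:R : 'I_4) = o2. Proof. by apply/val_inj. Qed.
Lemma idx1 : (1%:R : 'I_4) = o1. Proof. by apply/val_inj. Qed.
Lemma idx0 : (0%:R : 'I_4) = o0. Proof. by apply/val_inj. Qed.

Section Real.
Variable R : realType.
Let s : R := Num.sqrt 2.
Lemma ss : s * s = 2.
Proof. by rewrite -expr2 sqr_sqrtr // ler0n. Qed.
Lemma s_neq0 : s != 0.
Proof. by apply/negP => /eqP h; have := ss; rewrite h mul0r => /esym/eqP; rewrite pnatr_eq0. Qed.

Definition evz (x : zd) : R := x.1%:~R + x.2%:~R * s.
Lemma addzE : intZmod.addz = +%R. Proof. by []. Qed.
Lemma mulzE : intRing.mulz = *%R. Proof. by []. Qed.
Lemma evz_add x y : evz (zadd x y) = evz x + evz y.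
Proof. case: x y => [a b] [c d]; rewrite /evz /zadd addzE /= !intrD; ring. Qed.
Lemma evz_mul x y : evz (zmul x y) = evz x * evz y.
Proof.
case: x y => [a b] [c d]; rewrite /evz /zmul addzE mulzE /= !intrD !intrM.
have -> : (Posz 2)%:~R = s * s :> R by rewrite ss.
ring.
Qed.
Definition evalmx (A : smat) : 'M[R]_4 := \matrix_(a, b) evz (A a b).
Lemma evalmx_mul A B : evalmx (smul A B) = evalmx A *m evalmx B.
Proof.
apply/matrixP => a b; rewrite !mxE sum4 !mxE /smul !evz_add !evz_mul.
by rewrite !addrA.
Qed.
Lemma evalmx_tab A : evalmx (tab A) = evalmx A.
Proof.
apply/matrixP => a b; rewrite !mxE.
by case: (o_cases a) => ->; case: (o_cases b) => ->.
Qed.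
Lemma evalmx_tr A : (evalmx A)^T = evalmx (strans A).
Proof. by apply/matrixP => a b; rewrite !mxE. Qed.

Lemma bs_eval (j k : 'I_4) : bs_mx j k = s^-1 *: evalmx (sS j k).
Proof.
apply/matrixP => a b; rewrite !mxE /sS !oeqE /evz.
have e1 : s^-1 = s^-1 * ((Posz 1)%:~R + (Posz 0)%:~R * s) by rewrite /= mul0r addr0 mulr1.
have e2 : - s^-1 = s^-1 * ((Negz 0)%:~R + (Posz 0)%:~R * s) by rewrite /= mul0r addr0 NegzE mulrN1.
have e3 : 0 = s^-1 * ((Posz 0)%:~R + (Posz 0)%:~R * s) :> R by rewrite /= mul0r addr0 mulr0.
have e4 : 1 = s^-1 * ((Posz 0)%:~R + (Posz 1)%:~R * s) :> R by rewrite /= add0r mul1r mulVf // s_neq0.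
by repeat case: ifP => _ /=.
Qed.

Lemma network_eval (j k : 'I_4 -> 'I_4) : @network_mx R j k = (4:R)^-1 *: evalmx (sP j k).
Proof.
rewrite /network_mx /sP !(evalmx_tab, evalmx_mul) !bs_eval idx0 idx1 idx2 idx3.
repeat (rewrite -scalemxAl || rewrite -scalemxAr).
rewrite !scalerA.
congr (_ *: _).
have h : s^-1 * s^-1 = 2^-1 by rewrite -invfM ss.
rewrite !mulrA h -mulrA h -invfM; congr (_^-1).
by rewrite -natrM.
Qed.

Lemma sq4 (p q : int) : p * q = 0 -> evz (p, q) ^+ 2 = 4 -> pm2 (p, q).
Proof.
move/eqP; rewrite mulf_eq0 => /orP [/eqP-> | /eqP->]; rewrite /evz /=.
- rewrite add0r exprMn [s ^+ 2]expr2 ss => h.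
  have : (q * q * 2)%:~R = (4 : int)%:~R :> R.
    by rewrite !intrM -expr2 h.
  move/intr_inj => e; exfalso.
  have [h1|[h1|h1]] : q <= -2 \/ (-1 <= q /\ q <= 1) \/ 2 <= q by lia.
  1-3: nia.
- rewrite mul0r addr0 => h.
  have : (p * p)%:~R = (4 : int)%:~R :> R by rewrite intrM -expr2 h.
  move/intr_inj => e.
  have [h1|[h1|[h1|[h1|h1]]]] : p <= -3 \/ p = -2 \/ (-1 <= p /\ p <= 1) \/ p = 2 \/ 3 <= p by lia.
  + exfalso; clear h; nia.
  + by rewrite h1.
  + exfalso; clear h; nia.
  + by rewrite h1.
  + exfalso; clear h; nia.
Qed.

Lemma pm2_norm x : pm2 x -> `|evz x| = 2.
Proof.
case/orP => /zdeqP -> ; rewrite /evz /= mul0r addr0.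
  by rewrite ger0_norm // ler0n.
by rewrite NegzE normrN ger0_norm // ler0n.
Qed.
End Real.

Lemma alloP (p : 'I_4 -> bool) : reflect (forall i, p i) (allo p).
Proof. by rewrite alloE; apply: forallP. Qed.
Lemma exoP (p : 'I_4 -> bool) : reflect (exists i, p i) (exo p).
Proof. by rewrite exoE; apply: existsP. Qed.

Lemma b2n (b : bool) : (if b then 1 else 0)%N = b. Proof. by case: b. Qed.

Lemma card_acts (j k : 'I_4 -> 'I_4) m :
  #|[set i | acts_on j k i m]| = (acts j k o0 m + acts j k o1 m + acts j k o2 m + acts j k o3 m)%N.
Proof. by rewrite cardsE -sum1_card big_mkcond /= sum4 !b2n. Qed.

Lemma set2_eq (T : finType) (a b c d : T) :
  ([set a; b] == [set c; d]) = ((a == c) && (b == d)) || ((a == d) && (b == c)).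
Proof.
apply/eqP/idP => [E|].
  have ha : a \in [set c; d] by rewrite -E set21.
  have hb : b \in [set c; d] by rewrite -E set22.
  have hc : c \in [set a; b] by rewrite E set21.
  have hd : d \in [set a; b] by rewrite E set22.
  rewrite !inE in ha hb hc hd.
  case/orP: ha => /eqP ea; case/orP: hb => /eqP eb; subst;
    rewrite ?eqxx ?orbT //=.
  - by case/orP: hd => /eqP ->; rewrite eqxx.
  - by case/orP: hc => /eqP ->; rewrite eqxx ?orbT.
by case/orP => /andP [/eqP -> /eqP ->] //; rewrite setUC.
Qed.

Lemma cond_equiv (j k : 'I_4 -> 'I_4) :
  [&& two_b j k, first_b j k & dist_b j k] <->
  [/\ cond_two_each j k, cond_first_round j k & cond_distinct_pairs j k].
Proof.
split.
  case/and3P => h1 h2 h3; split.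
  - by move=> m; rewrite card_acts; apply/eqP; move/alloP: h1 => /(_ m).
  - move=> i m him [i' [lt hi']] m'.
    move/alloP: h2 => /(_ i) /alloP /(_ m) /implyP /(_ him) /implyP.
    have hex : exo (fun i0 => ltb i0 i && acts j k i0 m).
      by apply/exoP; exists i'; rewrite /ltb lt.
    move=> /(_ hex) /alloP /(_ m') /exoP [i'' /andP [l h']].
    by exists i''.
  - move=> i i' ne.
    move/alloP: h3 => /(_ i) /alloP /(_ i') /implyP /(_ ne).
    by rewrite set2_eq.
case=> h1 h2 h3; apply/and3P; split.
- apply/alloP => m; apply/eqP; by rewrite -card_acts h1.
- apply/alloP => i; apply/alloP => m; apply/implyP => him; apply/implyP => /exoP [i' /andP [lt hi']].
  apply/alloP => m'; have [i'' [l h']] := h2 i m him (ex_intro _ i' (conj lt hi')) m'.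
  by apply/exoP; exists i''; rewrite /ltb l.
- apply/alloP => i; apply/alloP => i'; apply/implyP => ne.
  by move: (h3 i i' ne); rewrite set2_eq.
Qed.

Lemma main_aux (R : realType) (M : 'M[R]_4) (P : smat) (c : bool) (X : Prop)
  (hM : M = 4^-1 *: evalmx R P)
  (hr : if sym_ok P then orth_ok P && c else wit P && ~~ c)
  (hc : c <-> X) :
  real_balanced_four_splitter M <-> X.
Proof.
case hs: (sym_ok P) in hr.
  case/andP: hr => ho hcb; split=> _; first by apply/hc.
  have hab : forall a b, `|M a b| = 2^-1.
    move=> a b; rewrite hM !mxE normrM pm2_norm; last first.
      by move/alloP: hs => /(_ a) /alloP /(_ b).
    rewrite ger0_norm ?invr_ge0 ?ler0n //.
    by field.
  split; last by move=> a b a' b'; rewrite !hab.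
  rewrite hM linearZ /= evalmx_tr -scalemxAl -scalemxAr scalerA -evalmx_mul.
  apply/matrixP => a b; rewrite !mxE.
  move/alloP: ho => /(_ a) /alloP /(_ b) /zdeqP ->.
  rewrite oeqE; case: (a == b); rewrite /evz /= ?mul0r ?addr0.
    have -> : (Posz 16)%:~R = 4 * 4 :> R by rewrite -natrM.
    by rewrite -invfM mulVf // mulf_neq0 // pnatr_eq0.
  by rewrite mulr0.
case/andP: hr => hw hcb; split; last first.
  by move/hc => h; rewrite h in hcb.
case=> hO hA; exfalso.
have L1 : forall x : R, x = 4^-1 * (x + x + x + x) by move=> x; field.
have L2 : forall x : R, x = 4 ^+ 2 * ((4^-1) ^+ 2 * x) by move=> x; field.
have key : forall a b, M a b ^+ 2 = 4^-1.
  move=> a b.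
  have e1 : (M *m M^T) o0 o0 = 1 by rewrite hO mxE.
  rewrite mxE sum4 !mxE in e1.
  have sq : forall c0, M o0 c0 * M o0 c0 = M a b ^+ 2.
    by move=> c0; rewrite -expr2 -(real_normK (num_real (M o0 c0))) -(real_normK (num_real (M a b))) (hA o0 c0 a b).
  rewrite !sq in e1.
  by rewrite [LHS]L1 e1 mulr1.
move/exoP: hw => [a /exoP [b /andP [hpq hn]]].
have h4 : evz R (P a b) ^+ 2 = 4.
  have := key a b; rewrite hM !mxE exprMn => e.
  by rewrite [LHS]L2 e expr2 -mulrA mulfV ?mulr1 // pnatr_eq0.
move: hpq hn h4; case: (P a b) => p q /= /zeqbP hpq hn h4.
by move: (@sq4 R p q hpq h4); rewrite (negbTE hn).
Qed.

Theorem theorem2 (R : realType) (j k : 'I_4 -> 'I_4)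
  (hjk : forall i : 'I_4, j i != k i) :
  real_balanced_four_splitter (@network_mx R j k) <->
  [/\ cond_two_each j k, cond_first_round j k & cond_distinct_pairs j k].
Proof.
apply: (@main_aux R (network_mx j k) (sP j k) [&& two_b j k, first_b j k & dist_b j k]).
- exact: network_eval.
- by move: (result_ok j k hjk); rewrite /result /=.
- exact: cond_equiv.
Qed.
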